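(* Let $Q$ be a topological $k$-quandle and let $L^1_C$ and $L^2_{C'}$ be $k$-colored links. Then $\hat{J}_Q(L^1_C\amalg L^2_{C'})$ is homeomorphic to $\hat{J}_Q(L^1_C)\times\hat{J}_Q(L^2_{C'})$, where $L^1_C\amalg L^2_{C'}$ denotes the disjoint (split) sum of the two colored links.
   Context: A quandle is a set with a binary operation $\triangleright$ such that $x\triangleright x=x$, each right translation $x\mapsto x\triangleright y$ is a bijection (inverse written $x\mapsto x\triangleright^{-1}y$), and $(x\triangleright y)\triangleright z=(x\triangleright z)\triangleright(y\triangleright z)$. A $k$-quandle is a set with operations $\triangleright_1,\dots,\triangleright_k$, each making it a quandle, with $(x\triangleright_i y)\triangleright_j z=(x\triangleright_j z)\triangleright_i(y\triangleright_j z)$ for all $i,j,x,y,z$. A topological $k$-quandle is a $k$-quandle with a topology making all $\triangleright_i,\triangleright_i^{-1}:Q\times Q\to Q$ continuous. A $k$-colored link is an oriented link whose components are each labeled by one of the colors $1,\dots,k$, considered up to orientation- and color-preserving ambient isotopy. A $k$-colored $n$-braid ${}^v_w\sigma$ is an $n$-strand braid (oriented top to bottom) with colored strands, $v$ and $w$ being the color tuples at the top and bottom ends read left to right; the closure of ${}^v_v\sigma$ joins each top end to the bottom end in the same position and is a $k$-colored link, and every $k$-colored link arises this way. For $v$ and $w$ differing by a swap of entries $i,i+1$, the elementary colored braid ${}^v_w\sigma_i$ induces the homeomorphism $Q^n\to Q^n$, $x\mapsto x'$ with $x'_j=x_j$ for $j\ne i,i+1$, $x'_i=x_{i+1}$,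 $x'_{i+1}=x_i\triangleright_{v_{i+1}}x_{i+1}$; ${}^w_v\sigma_i^{-1}$ induces its inverse; a product ${}^{v^1}_{v^2}\sigma_{i_1}^{\pm}\cdots{}^{v^m}_{v^{m+1}}\sigma_{i_m}^{\pm}$ induces the composite ${}^{v^m}_{v^{m+1}}\sigma_{i_m}^{\pm}\circ\cdots\circ{}^{v^1}_{v^2}\sigma_{i_1}^{\pm}$. For $L_C=\overline{{}^v_v\sigma}$, $\hat{J}_Q(L_C)\subseteq Q^n$ is the space of fixed points of the map ${}^v_v\sigma:Q^n\to Q^n$ (with subspace topology); up to homeomorphism it depends only on the colored link $L_C$. *)

(* Defs.v *)
From HB Require Import structures.
From mathcomp Require Import all_boot all_order all_algebra.
From mathcomp Require Import all_classical all_reals all_analysis.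
Set Implicit Arguments. Unset Strict Implicit. Unset Printing Implicit Defensive.
Local Open Scope classical_set_scope.

(* op i x y = x |>_i y,  opinv i x y = x |>_i^{-1} y  (colors 0..k-1). *)
Definition is_top_kquandle (k : nat) (Q : topologicalType)
  (op opinv : 'I_k -> Q -> Q -> Q) : Prop :=
  (forall i x, op i x x = x) /\
  (forall i y, cancel (fun x => op i x y) (fun x => opinv i x y)) /\
  (forall i y, cancel (fun x => opinv i x y) (fun x => op i x y)) /\
  (forall i j x y z, op j (op i x y) z = op i (op j x z) (op j y z)) /\
  (forall i, continuous (fun p : Q * Q => op i p.1 p.2)) /\
  (forall i, continuous (fun p : Q * Q => opinv i p.1 p.2)).

Definition homeomorphic (X Y : topologicalType) (A : set X) (B : set Y) : Prop :=
  exists (f : X -> Y) (g : Y -> X),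
    (forall x, A x -> B (f x)) /\ (forall y, B y -> A (g y)) /\
    (forall x, A x -> g (f x) = x) /\ (forall y, B y -> f (g y) = y) /\
    {within A, continuous f} /\ {within B, continuous g}.

(* A colored n-braid word: top colors c : 'I_n -> 'I_k and a list of letters
   (i, true) = sigma_i, (i, false) = sigma_i^{-1}, with 0-based strand index i
   acting on positions i and i+1 (so i.+1 < n is required). *)
Definition swapn (i j : nat) : nat :=
  if j == i then i.+1 else if j == i.+1 then i else j.

Definition cswap (k n : nat) (i : nat) (c : 'I_n -> 'I_k) : 'I_n -> 'I_k :=
  fun j => c (insubd j (swapn i j)).

Definition valid_word (n : nat) (w : seq (nat * bool)) : bool :=
  all (fun p => p.1.+1 < n) w.

Fixpoint final_colors (k n : nat) (c : 'I_n -> 'I_k) (w : seq (nat * bool))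
  : 'I_n -> 'I_k :=
  if w is p :: w' then final_colors (cswap p.1 c) w' else c.

Section BraidMap.
Variables (k : nat) (Q : Type) (op opinv : 'I_k -> Q -> Q -> Q).

Definition gen_map (n : nat) (c : 'I_n -> 'I_k) (i : nat) (b : bool)
  (x : 'I_n -> Q) : 'I_n -> Q :=
  fun j =>
    let at_ m := x (insubd j m) in
    let col m := c (insubd j m) in
    if b then
      (* sigma_i: x'_i = x_{i+1}, x'_{i+1} = x_i |>_{c_{i+1}} x_{i+1} *)
      (if val j == i then at_ i.+1
       else if val j == i.+1 then op (col i.+1) (at_ i) (at_ i.+1)
       else x j)
    else
      (* sigma_i^{-1} with top colors c: inverse of sigma_i with top colors
         cswap i c: x'_i = x_{i+1} |>^{-1}_{c_i} x_i, x'_{i+1} = x_i *)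
      (if val j == i then opinv (col i) (at_ i.+1) (at_ i)
       else if val j == i.+1 then at_ i
       else x j).

Fixpoint braid_map (n : nat) (c : 'I_n -> 'I_k) (w : seq (nat * bool))
  (x : 'I_n -> Q) : 'I_n -> Q :=
  if w is p :: w' then braid_map (cswap p.1 c) w' (gen_map c p.1 p.2 x) else x.
End BraidMap.

(* J-hat_Q of the closure of the colored braid (c, w): fixed points of the
   induced map on Q^n (product topology), as a subset of Q^n. *)
Definition Jhat (k : nat) (Q : topologicalType) (op opinv : 'I_k -> Q -> Q -> Q)
  (n : nat) (c : 'I_n -> 'I_k) (w : seq (nat * bool)) : set {ptws 'I_n -> Q} :=
  [set x : {ptws 'I_n -> Q} | braid_map op opinv c w x = x].

(* ---------- juxtaposition of colored braids (closure = split sum) ---------- *)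
Definition cat_colors (k n m : nat) (c1 : 'I_n -> 'I_k) (c2 : 'I_m -> 'I_k)
  : 'I_(n + m) -> 'I_k :=
  fun j => match fintype.split j with inl a => c1 a | inr b => c2 b end.

Definition cat_words (n : nat) (w1 w2 : seq (nat * bool)) : seq (nat * bool) :=
  w1 ++ map (fun p => (p.1 + n, p.2)) w2.

(* Main.v *)
Require Import Defs.
From HB Require Import structures.
From mathcomp Require Import all_boot all_order all_algebra.
From mathcomp Require Import all_classical all_reals all_analysis.
From mathcomp Require Import zify.
Set Implicit Arguments. Unset Strict Implicit.
Local Open Scope classical_set_scope.

Definition lft (T : Type) (n m : nat) (x : 'I_(n + m) -> T) : 'I_n -> T :=
  fun a => x (lshift m a).
Definition rgt (T : Type) (n m : nat) (x : 'I_(n + m) -> T) : 'I_m -> T :=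
  fun b => x (rshift n b).

Lemma split_l n m (a : 'I_n) : fintype.split (lshift m a) = inl a.
Proof. exact: (@unsplitK n m (inl a)). Qed.
Lemma split_r n m (b : 'I_m) : fintype.split (rshift n b) = inr b.
Proof. exact: (@unsplitK n m (inr b)). Qed.

Lemma insubd_l n m (a : 'I_n) t : t < n -> insubd (lshift m a) t = lshift m (insubd a t).
Proof.
move=> h; apply: val_inj; rewrite /= !val_insubd h.
by have -> : t < n + m by lia.
Qed.

Lemma insubd_r n m (b : 'I_m) t : t < m -> insubd (rshift n b) (n + t) = rshift n (insubd b t).
Proof.
move=> h; apply: val_inj; rewrite /= !val_insubd h.
by have -> : n + t < n + m by lia.
Qed.

Lemma lr_ext (T : Type) n m (x y : 'I_(n + m) -> T) :
  lft x = lft y -> rgt x = rgt y -> x = y.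
Proof.
move=> hl hr; apply: funext => j; rewrite -(splitK j).
case: (fintype.split j) => [a|b] /=.
  exact: (congr1 (fun f => f a) hl).
exact: (congr1 (fun f => f b) hr).
Qed.

Lemma swapn_lt i n a : i.+1 < n -> a < n -> swapn i a < n.
Proof. by rewrite /swapn; case: eqP => [->|_]; [|case: eqP => [->|_]]; lia. Qed.


Lemma gen_lft_lo (k : nat) (Q : Type) (op opinv : 'I_k -> Q -> Q -> Q) (n m : nat) (C : 'I_(n+m) -> 'I_k) i b x : i.+1 < n ->
  lft (gen_map op opinv C i b x) = gen_map op opinv (lft C) i b (lft x).
Proof.
move=> h; have h' : i < n by lia.
apply: funext => a; rewrite /lft /gen_map /=.
by rewrite !insubd_l.
Qed.

Lemma gen_rgt_lo (k : nat) (Q : Type) (op opinv : 'I_k -> Q -> Q -> Q) (n m : nat) (C : 'I_(n+m) -> 'I_k) i b x : i.+1 < n ->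
  rgt (gen_map op opinv C i b x) = rgt x.
Proof.
move=> h; apply: funext => a; rewrite /rgt /gen_map /=.
have -> : (n + a == i) = false by lia.
have -> : (n + a == i.+1) = false by lia.
by case: b.
Qed.

Lemma cswap_lft_lo (k n m : nat) (C : 'I_(n+m) -> 'I_k) i : i.+1 < n ->
  lft (cswap i C) = cswap i (lft C).
Proof.
move=> h; apply: funext => a; have ha := ltn_ord a; rewrite /lft /cswap /=.
by rewrite insubd_l // swapn_lt.
Qed.

Lemma cswap_rgt_lo (k n m : nat) (C : 'I_(n+m) -> 'I_k) i : i.+1 < n ->
  rgt (cswap i C) = rgt C.
Proof.
move=> h; apply: funext => a; rewrite /rgt /cswap /=.
have -> : swapn i (n + a) = val (rshift n a).
  rewrite /swapn /=. have -> : (n + a == i) = false by lia. have -> : (n + a == i.+1) = false by lia. by [].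
by rewrite valKd.
Qed.

Lemma gen_lft_hi (k : nat) (Q : Type) (op opinv : 'I_k -> Q -> Q -> Q) (n m : nat) (C : 'I_(n+m) -> 'I_k) i b x : i.+1 < m ->
  lft (gen_map op opinv C (i + n) b x) = lft x.
Proof.
move=> h; apply: funext => a; have ha := ltn_ord a; rewrite /lft /gen_map /=.
have -> : (a == i + n :> nat) = false by lia.
have -> : (a == (i + n).+1 :> nat) = false by lia.
by case: b.
Qed.

Lemma gen_rgt_hi (k : nat) (Q : Type) (op opinv : 'I_k -> Q -> Q -> Q) (n m : nat) (C : 'I_(n+m) -> 'I_k) i b x : i.+1 < m ->
  rgt (gen_map op opinv C (i + n) b x) = gen_map op opinv (rgt C) i b (rgt x).
Proof.
move=> h; have h' : i < m by lia.
apply: funext => a; rewrite /rgt /gen_map /=.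
by rewrite -addSn !(addnC _ n) !eqn_add2l !insubd_r.
Qed.

Lemma cswap_lft_hi (k n m : nat) (C : 'I_(n+m) -> 'I_k) i : i.+1 < m ->
  lft (cswap (i + n) C) = lft C.
Proof.
move=> h; apply: funext => a; have ha := ltn_ord a; rewrite /lft /cswap /=.
have -> : swapn (i + n) a = val (lshift m a).
  rewrite /swapn /=. have -> : (a == i + n :> nat) = false by lia. have -> : (a == (i + n).+1 :> nat) = false by lia. by [].
by rewrite valKd.
Qed.

Lemma cswap_rgt_hi (k n m : nat) (C : 'I_(n+m) -> 'I_k) i : i.+1 < m ->
  rgt (cswap (i + n) C) = cswap i (rgt C).
Proof.
move=> h; apply: funext => a; rewrite /rgt /cswap /=.
have -> : swapn (i + n) (n + a) = n + swapn i a.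
  rewrite /swapn -addSn !(addnC _ n) !eqn_add2l.
  by case: eqP => //; case: eqP.
by rewrite insubd_r // swapn_lt.
Qed.

Definition shiftw (n : nat) (w : seq (nat * bool)) := map (fun p => (p.1 + n, p.2)) w.

Lemma braid_cat k Q (op opinv : 'I_k -> Q -> Q -> Q) N (C : 'I_N -> 'I_k) w1 w2 x :
  braid_map op opinv C (w1 ++ w2) x =
  braid_map op opinv (final_colors C w1) w2 (braid_map op opinv C w1 x).
Proof. by elim: w1 C x => [|p w IH] C x //=. Qed.

Lemma braid_lo k Q (op opinv : 'I_k -> Q -> Q -> Q) n m (C : 'I_(n+m) -> 'I_k) w x :
  valid_word n w ->
  [/\ lft (braid_map op opinv C w x) = braid_map op opinv (lft C) w (lft x),
      rgt (braid_map op opinv C w x) = rgt x,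
      lft (final_colors C w) = final_colors (lft C) w &
      rgt (final_colors C w) = rgt C].
Proof.
elim: w C x => [|p w IH] C x //= /andP[hp hw].
have [h1 h2 h3 h4] := IH (cswap p.1 C) (gen_map op opinv C p.1 p.2 x) hw.
by rewrite h1 h2 h3 h4 gen_lft_lo // gen_rgt_lo // cswap_lft_lo // cswap_rgt_lo.
Qed.

Lemma braid_hi k Q (op opinv : 'I_k -> Q -> Q -> Q) n m (C : 'I_(n+m) -> 'I_k) w x :
  valid_word m w ->
  [/\ rgt (braid_map op opinv C (shiftw n w) x) = braid_map op opinv (rgt C) w (rgt x),
      lft (braid_map op opinv C (shiftw n w) x) = lft x,
      rgt (final_colors C (shiftw n w)) = final_colors (rgt C) w &
      lft (final_colors C (shiftw n w)) = lft C].
Proof.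
elim: w C x => [|p w IH] C x //= /andP[hp hw].
have [h1 h2 h3 h4] := IH (cswap (p.1 + n) C) (gen_map op opinv C (p.1 + n) p.2 x) hw.
by rewrite h1 h2 h3 h4 gen_rgt_hi // gen_lft_hi // cswap_rgt_hi // cswap_lft_hi.
Qed.

Lemma lft_cat k n m (c1 : 'I_n -> 'I_k) (c2 : 'I_m -> 'I_k) : lft (cat_colors c1 c2) = c1.
Proof. by apply: funext => a; rewrite /lft /cat_colors split_l. Qed.
Lemma rgt_cat k n m (c1 : 'I_n -> 'I_k) (c2 : 'I_m -> 'I_k) : rgt (cat_colors c1 c2) = c2.
Proof. by apply: funext => a; rewrite /rgt /cat_colors split_r. Qed.

Lemma braid_split k Q (op opinv : 'I_k -> Q -> Q -> Q) n m c1 c2 w1 w2 (x : 'I_(n+m) -> Q) :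
  valid_word n w1 -> valid_word m w2 ->
  lft (braid_map op opinv (cat_colors c1 c2) (cat_words n w1 w2) x) = braid_map op opinv c1 w1 (lft x) /\
  rgt (braid_map op opinv (cat_colors c1 c2) (cat_words n w1 w2) x) = braid_map op opinv c2 w2 (rgt x).
Proof.
move=> v1 v2; rewrite /cat_words braid_cat -/(shiftw n w2).
have [a1 a2 a3 a4] := braid_lo op opinv (cat_colors c1 c2) x v1.
have [b1 b2 b3 b4] := braid_hi op opinv (final_colors (cat_colors c1 c2) w1)
   (braid_map op opinv (cat_colors c1 c2) w1 x) v2.
by rewrite b1 b2 a1 a2 a4 lft_cat rgt_cat.
Qed.

Lemma ptws_into (X : topologicalType) (I : Type) (Q : topologicalType)
  (f : X -> {ptws I -> Q}) : (forall i, continuous (fun x => f x i)) -> continuous f.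
Proof.
move=> h x; apply/cvg_sup => i.
rewrite cvg_image; last first.
  by rewrite eqEsubset; split=> v // _; exists (fun _ => v).
apply: cvg_trans (h i x) => W /= hW.
exists ((fun g : {ptws I -> Q} => g i) @^-1` W); first by [].
by rewrite eqEsubset; split => [j [? + <-//]|j Wj]; exists (fun _ => j).
Qed.

Theorem mainTheorem7 (k : nat) (Q : topologicalType)
  (op opinv : 'I_k -> Q -> Q -> Q) (HQ : is_top_kquandle op opinv)
  (n m : nat) (c1 : 'I_n -> 'I_k) (w1 : seq (nat * bool))
  (c2 : 'I_m -> 'I_k) (w2 : seq (nat * bool)) :
  valid_word n w1 -> final_colors c1 w1 = c1 ->
  valid_word m w2 -> final_colors c2 w2 = c2 ->
  homeomorphic
    (Jhat op opinv (cat_colors c1 c2) (cat_words n w1 w2))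
    (Jhat op opinv c1 w1 `*` Jhat op opinv c2 w2).
Proof.
move=> v1 _ v2 _.
pose f := fun x : {ptws 'I_(n + m) -> Q} =>
  ((lft x : {ptws 'I_n -> Q}), (rgt x : {ptws 'I_m -> Q})).
pose g := fun p : {ptws 'I_n -> Q} * {ptws 'I_m -> Q} =>
  ((fun j => match fintype.split j with inl a => p.1 a | inr b => p.2 b end)
    : {ptws 'I_(n + m) -> Q}).
have gl p : lft (g p) = p.1 by apply: funext => a; rewrite /lft /g split_l.
have gr p : rgt (g p) = p.2 by apply: funext => a; rewrite /rgt /g split_r.
have gf x : g (f x) = x by apply: lr_ext; [rewrite gl|rewrite gr].
exists f, g; split; [|split; [|split; [|split; [|split]]]].
- move=> x hx; have [h1 h2] := braid_split op opinv c1 c2 x v1 v2.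
  by split; rewrite /Jhat /= -?h1 -?h2 hx.
- move=> [y z] [/= hy hz].
  have [h1 h2] := braid_split op opinv c1 c2 (g (y, z)) v1 v2.
  rewrite /Jhat /=; apply: lr_ext.
    by rewrite h1 gl hy.
  by rewrite h2 gr hz.
- by move=> x _; exact: gf.
- by move=> [y z] _; rewrite /f gl gr.
- have hl : continuous (fun x : {ptws 'I_(n + m) -> Q} => (lft x : {ptws 'I_n -> Q})).
    by apply: ptws_into => a; exact: proj_continuous.
  have hr : continuous (fun x : {ptws 'I_(n + m) -> Q} => (rgt x : {ptws 'I_m -> Q})).
    by apply: ptws_into => b; exact: proj_continuous.
  apply: continuous_subspaceT => x; exact: (cvg_pair (hl x) (hr x)).
- apply: continuous_subspaceT; apply: ptws_into => j.
  rewrite /g; case: (fintype.split j) => [a|b] p.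
  + apply: (@continuous_comp _ _ _ fst (fun y : {ptws 'I_n -> Q} => y a)).
      exact: cvg_fst.
    exact: proj_continuous.
  + apply: (@continuous_comp _ _ _ snd (fun y : {ptws 'I_m -> Q} => y b)).
      exact: cvg_snd.
    exact: proj_continuous.
Qed.
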